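(* Let $(S,d)$ be a finite metric space partitioned into two disjoint groups $S=S_1\cup S_2$, let $k_1,k_2$ be nonnegative integers with $k=k_1+k_2$, and let $r^*$ be the optimal radius of the fair $k$-center problem on this instance. For $l\in\{1,2\}$ let $\Gamma_l\subseteq S_l$ be a $2r^*$-independent center set of $S_l$, and suppose $|\Gamma_1|>k_1$ and $|\Gamma_2|>k_2$. Run Phase 1 (described in the context) on $\Gamma_1,\Gamma_2$. Then when Phase 1 completes, the resulting set $C$ satisfies $|C\cap S_l|\le k_l$ for each $l\in\{1,2\}$.
   Context: The fair $k$-center problem: a set $C\subseteq S$ is feasible if $|C\cap S_l|\le k_l$ for each $l$; its cost is $\max_{s\in S}d(s,C)$ with $d(s,C)=\min_{c\in C}d(s,c)$ and $d(s,\emptyset)=\infty$. The optimal radius $r^*$ is the minimum cost over feasible $C$. For $T\subseteq S$, a set $\Gamma\subseteq T$ is a $\lambda$-independent center set of $T$ if (1) $d(p,q)>\lambda$ for any two distinct $p,q\in\Gamma$, and (2) every $p\in T$ has some $q\in\Gamma$ with $d(p,q)\le\lambda$. Phase 1: set $C\leftarrow\emptyset$; build the bipartite auxiliary graph $G$ with vertex set $\Gamma_1\cup\Gamma_2$ in which $p\in\Gamma_1$ and $q\in\Gamma_2$ are joined by an edge iff $d(p,q)\le 3r^*$ (no other edges); then, for each vertex $i$ of degree $0$ in $G$ (in any order), if $d(C,i)>2r^*$ add $i$ to $C$; finally remove all degree-$0$ vertices from $G$. *)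

(* Defs.v *)
From HB Require Import structures.
From mathcomp Require Import all_boot all_order all_algebra.
From mathcomp Require Import reals constructive_ereal.
Set Implicit Arguments. Unset Strict Implicit. Unset Printing Implicit Defensive.
Import Order.TTheory GRing.Theory Num.Theory.
Local Open Scope ring_scope.
Local Open Scope ereal_scope.

Section FairKCenter.
Variables (R : realType) (T : finType) (d : T -> T -> R).

Definition is_metric : Prop :=
  [/\ forall x y, d x y = 0%R <-> x = y,
      forall x y, d x y = d y x &
      forall x y z, (d x z <= d x y + d y z)%R].

Definition dist_set (C : {set T}) (s : T) : \bar R :=
  \big[mine/+oo]_(c in C) (d s c)%:E.

(* cost(C) = max_{s in S} d(s,C), S = the whole (finite) space T *)
Definition cost (C : {set T}) : \bar R :=
  \big[maxe/-oo]_(s : T) dist_set C s.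

Definition feasible (S1 S2 : {set T}) (k1 k2 : nat) (C : {set T}) : bool :=
  (#|C :&: S1| <= k1)%N && (#|C :&: S2| <= k2)%N.

Definition opt_radius (S1 S2 : {set T}) (k1 k2 : nat) : \bar R :=
  \big[mine/+oo]_(C : {set T} | feasible S1 S2 k1 k2 C) cost C.

Definition indep_center_set (lam : \bar R) (Tset Gamma : {set T}) : Prop :=
  [/\ Gamma \subset Tset,
      (forall p q, p \in Gamma -> q \in Gamma -> p != q -> lam < (d p q)%:E) &
      (forall p, p \in Tset -> exists2 q, q \in Gamma & (d p q)%:E <= lam)].

Definition aux_edge (r : \bar R) (G1 G2 : {set T}) (p q : T) : bool :=
  [&& p \in G1, q \in G2 & (d p q)%:E <= 3%:E * r].

Definition deg0 (r : \bar R) (G1 G2 : {set T}) : {set T} :=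
  [set i in G1 :|: G2 |
     [forall j, ~~ aux_edge r G1 G2 i j && ~~ aux_edge r G1 G2 j i]].

(* Phase 1 processing the degree-0 vertices in the order given by s *)
Definition phase1 (r : \bar R) (s : seq T) : {set T} :=
  foldl (fun C i => if 2%:E * r < dist_set C i then i |: C else C) set0 s.

End FairKCenter.

(* Main.v *)
Require Import Defs.
From HB Require Import structures.
From mathcomp Require Import all_boot all_order all_algebra.
From mathcomp Require Import reals constructive_ereal.
From mathcomp Require Import lra.
Import Order.TTheory GRing.Theory Num.Theory.
Local Open Scope ring_scope.
Local Open Scope ereal_scope.

Section Aux.
Variables (R : realType) (T : finType) (d : T -> T -> R).

Lemma mine_attained (I : finType) (P : pred I) (F : I -> \bar R) :
  \big[mine/+oo]_(i | P i) F i = +oo \/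
  exists2 i, P i & F i = \big[mine/+oo]_(i | P i) F i.
Proof.
apply: (big_ind (fun y => y = +oo \/ exists2 i, P i & F i = y)); first by left.
- move=> x y Hx Hy; rewrite /Order.min; by case: ifP.
- move=> i Pi; right; by exists i.
Qed.

Lemma dist_le (C : {set T}) i c : c \in C -> dist_set d C i <= (d i c)%:E.
Proof. by move=> Hc; rewrite /dist_set (bigD1 c) //= ge_min lexx. Qed.

Lemma cost_ge (C : {set T}) i : dist_set d C i <= cost d C.
Proof. by rewrite /cost (bigD1 i) //= le_max lexx. Qed.

Lemma foldl_sub r s (C0 : {set T}) :
  foldl (fun C i => if 2%:E * r < dist_set d C i then i |: C else C) C0 s
  \subset C0 :|: [set x | x \in s].
Proof.
elim: s C0 => [|a s IH] C0 /=; first by apply/subsetP=> x Hx; rewrite inE Hx.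
apply/subsetP => x /(subsetP (IH _)); rewrite !inE.
by case: ifP => _; rewrite ?inE; case: (x == a); case: (x \in C0); case: (x \in s).
Qed.

Lemma foldl_sep r s (C0 : {set T}) :
  (forall x y, d x y = d y x) ->
  (forall x y, x \in C0 -> y \in C0 -> x != y -> 2%:E * r < (d x y)%:E) ->
  let C := foldl (fun C i => if 2%:E * r < dist_set d C i then i |: C else C) C0 s in
  forall x y, x \in C -> y \in C -> x != y -> 2%:E * r < (d x y)%:E.
Proof.
move=> dsym; elim: s C0 => [|a s IH] C0 H0 //=.
apply: IH; case: ifP => // h x y; rewrite !inE.
case/orP=> [/eqP->|Hx]; case/orP=> [/eqP->|Hy]; rewrite ?eqxx //.
- move=> _; exact: (lt_le_trans h (@dist_le _ a _ Hy)).
- move=> _; rewrite dsym; exact: (lt_le_trans h (@dist_le _ a _ Hx)).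
- exact: H0.
Qed.

Lemma count_side (C Cs Sa : {set T}) (r : R) k :
  (forall x y, d x y = d y x) -> (forall x y z, d x z <= d x y + d y z)%R ->
  (forall x y, x \in C -> y \in C -> x != y -> (2 * r < d x y)%R) ->
  (forall i, i \in C :&: Sa -> exists2 c, c \in Cs :&: Sa & (d i c <= r)%R) ->
  (#|Cs :&: Sa| <= k)%N -> (#|C :&: Sa| <= k)%N.
Proof.
move=> dsym tri sep H hk; apply: leq_trans hk.
pose f i := odflt i [pick c in Cs :&: Sa | (d i c <= r)%R].
have fP : forall i, i \in C :&: Sa -> f i \in Cs :&: Sa /\ (d i (f i) <= r)%R.
  move=> i /H [c Hc Hd]; rewrite /f; case: pickP => [c' /andP[? ?]|/(_ c)] //=.
  by rewrite Hc Hd.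
rewrite -(card_in_imset (f:=f)).
  apply: subset_leq_card; apply/subsetP => _ /imsetP[i Hi ->]; exact: (fP i Hi).1.
move=> i j Hi Hj Efij; apply/eqP; apply/negPn/negP => nij.
have := sep i j (setIP Hi).1 (setIP Hj).1 nij.
have := tri i (f i) j; rewrite [d (f i) j]dsym Efij.
have := (fP i Hi).2; have := (fP j Hj).2; rewrite -Efij.
move=> h1 h2 h3 h4; clear -h1 h2 h3 h4; lra.
Qed.

End Aux.

Theorem lemma3 (R : realType) (T : finType) (d : T -> T -> R)
  (S1 S2 : {set T}) (k1 k2 : nat) (Gamma1 Gamma2 : {set T}) (s : seq T) :
  is_metric d ->
  S1 :&: S2 = set0 -> S1 :|: S2 = setT ->
  let rstar := opt_radius d S1 S2 k1 k2 in
  indep_center_set d (2%:E * rstar) S1 Gamma1 ->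
  indep_center_set d (2%:E * rstar) S2 Gamma2 ->
  (k1 < #|Gamma1|)%N -> (k2 < #|Gamma2|)%N ->
  perm_eq s (enum (deg0 d rstar Gamma1 Gamma2)) ->
  let C := phase1 d rstar s in
  (#|C :&: S1| <= k1)%N /\ (#|C :&: S2| <= k2)%N.
Proof.
move=> [_ dsym tri] H12 HU rstar HG1 HG2 Hk1 Hk2 Hs C.
have Hopt := @mine_attained R _ (fun C => feasible S1 S2 k1 k2 C) (cost d).
rewrite -/(opt_radius d S1 S2 k1 k2) -/rstar in Hopt.
have Csub : forall x, x \in C -> x \in deg0 d rstar Gamma1 Gamma2.
  move=> x /(subsetP (@foldl_sub _ _ d _ _ _)) Hx.
  have : x \in s by move: Hx; rewrite !inE.
  by rewrite (perm_mem Hs) mem_enum.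
have Csep := @foldl_sep _ _ d rstar s set0 dsym (fun x y => ltac:(by rewrite inE)).
rewrite -/(phase1 d rstar s) -/C in Csep.
clearbody C rstar.
have [p Hp] : exists p, p \in Gamma1.
  by apply/set0Pn; rewrite -card_gt0; apply: leq_ltn_trans Hk1.
have [q Hq] : exists q, q \in Gamma2.
  by apply/set0Pn; rewrite -card_gt0; apply: leq_ltn_trans Hk2.
case: (eqVneq rstar +oo) => [Ey|Hny].
  have Hy3 : 3%:E * +oo = +oo :> \bar R by rewrite gt0_muley // lte_fin.
  have -> : C = set0.
    apply/setP => x; rewrite inE; apply/negP => /Csub.
    rewrite inE => /andP[]; rewrite inE => /orP[Hx|Hx] /forallP Hall.
      by have := Hall q; rewrite /aux_edge Ey Hy3 !leey !andbT Hx Hq.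
    by have := Hall p; rewrite /aux_edge Ey Hy3 !leey !andbT Hx Hp andbF.
  by rewrite !set0I cards0.
case: Hopt => [Einf | [Cs Hfeas Ecost]]; first by rewrite Einf eqxx in Hny.
have key : forall i, exists2 c, c \in Cs & (d i c)%:E <= rstar.
  move=> i; have := @cost_ge _ _ d Cs i; rewrite Ecost.
  case: (@mine_attained R _ (fun c => c \in Cs) (fun c => (d i c)%:E)).
    rewrite -/(dist_set d Cs i) => ->; rewrite leye_eq (negbTE Hny) //.
  rewrite -/(dist_set d Cs i) => -[c Hc <-]; by exists c.
case: (set_0Vmem C) => [->|[i0 Hi0]]; first by rewrite !set0I cards0.
have [r Er] : exists r, rstar = r%:E.
  have [c _ Hc] := key i0; clear -Hc Hny; move: Hc Hny.
  case: rstar => [r _ _| |]; [by exists r | by [] |].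
  by rewrite leeNy_eq.
move: Ecost; rewrite Er => Ecost; subst rstar.
move/andP: Hfeas => [Hf1 Hf2].
have sepR : forall x y, x \in C -> y \in C -> x != y -> (2 * r < d x y)%R.
  by move=> x y Hx Hy Hxy; have := Csep x y Hx Hy Hxy; rewrite -EFinM lte_fin.
case: HG1 => [G1S1 _ cov1]; case: HG2 => [G2S2 _ cov2].
have notboth : forall x, x \in S1 -> x \in S2 -> False.
  move=> z h1 h2; have : z \in S1 :&: S2 by rewrite inE h1 h2.
  by rewrite H12 inE.
split.
- apply: (@count_side _ _ d _ _ _ _ _ dsym tri sepR _ Hf1) => i /setIP[HiC HiS].
  have := Csub i HiC; rewrite inE => /andP[]; rewrite inE => HiG /forallP Hall.
  have HiG1 : i \in Gamma1.
    case/orP: HiG => // /(subsetP G2S2) h; case: (notboth i HiS h).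
  case: (key i) => c Hc Hic; exists c; last by rewrite -lee_fin.
  rewrite inE Hc /=.
  case Hc1: (c \in S1) => //.
  have Hc2 : c \in S2 by have := in_setT c; rewrite -HU inE Hc1.
  case: (cov2 c Hc2) => q' Hq' Hcq.
  have := Hall q'; rewrite /aux_edge HiG1 Hq' /= -EFinM lee_fin.
  have := tri i c q'; move: Hic Hcq; rewrite -EFinM !lee_fin => h1 h2 h3.
  by have -> : (d i q' <= 3 * r)%R by lra.
- apply: (@count_side _ _ d _ _ _ _ _ dsym tri sepR _ Hf2) => i /setIP[HiC HiS].
  have := Csub i HiC; rewrite inE => /andP[]; rewrite inE => HiG /forallP Hall.
  have HiG2 : i \in Gamma2.
    case/orP: HiG => // /(subsetP G1S1) h; case: (notboth i h HiS).
  case: (key i) => c Hc Hic; exists c; last by rewrite -lee_fin.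
  rewrite inE Hc /=.
  case Hc2: (c \in S2) => //.
  have Hc1 : c \in S1 by have := in_setT c; rewrite -HU inE Hc2 orbF.
  case: (cov1 c Hc1) => q' Hq' Hcq.
  have := Hall q'; rewrite /aux_edge HiG2 Hq' /= -EFinM lee_fin.
  have := tri q' c i; move: Hic Hcq; rewrite -EFinM !lee_fin (dsym i c) (dsym c q') => h1 h2 h3.
  have -> : (d q' i <= 3 * r)%R by lra.
  by rewrite andbF.
Qed.
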